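(* Suppose $C=\{C_i\}_{i\in[n]}$ and $C'=\{C'_i\}_{i\in[n]}$ are normalized spectrahedral representations (by $k\times k$ matrices) of $K_C$ and $K_{C'}$ respectively. Then $\mathrm{hdist}(K_C,K_{C'})\le n^{3/2}\cdot\mathrm{mdist}(C,C')$.
   Context: For real symmetric $k\times k$ matrices $C=\{C_i\}_{i\in[n]}$, $K_C=\{x\in\mathbb{R}^n:\sum_iC_ix_i\succeq0\}$. The representation is normalized if $\sum_iC_i=\mathrm{Id}_k$ and each $C_i\succeq0$. $\mathrm{mdist}(C,C')=\max_i\|C_i-C'_i\|$ (operator norm). $\mathrm{hdist}(K,K')=\max(\sup_{x\in\mathcal{B}\cap K}d(x,K'),\sup_{y\in\mathcal{B}\cap K'}d(y,K))$, with $\mathcal{B}$ the Euclidean unit ball of $\mathbb{R}^n$ and $d$ the Euclidean distance. *)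

(* Defs.v *)
From mathcomp Require Import all_boot all_order all_algebra.
From mathcomp Require Import boolp classical_sets reals.
Set Implicit Arguments. Unset Strict Implicit. Unset Printing Implicit Defensive.
Import Order.TTheory GRing.Theory Num.Theory.
Local Open Scope ring_scope.
Local Open Scope classical_set_scope.

Section Defs.
Variable R : realType.

Definition enorm (m : nat) (v : 'cV[R]_m) : R := Num.sqrt (\sum_(i < m) v i 0 ^+ 2).

Definition psd (k : nat) (A : 'M[R]_k) : Prop := forall v : 'cV[R]_k, 0 <= (v^T *m A *m v) 0 0.

Definition symmetric (k : nat) (A : 'M[R]_k) : Prop := A^T = A.

Definition opnorm (k : nat) (A : 'M[R]_k) : R :=
  sup [set enorm (A *m v) | v in [set v : 'cV[R]_k | enorm v <= 1]].

Definition spectrahedron (n k : nat) (C : 'I_n -> 'M[R]_k) : set 'cV[R]_n :=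
  [set x | psd (\sum_(i < n) x i 0 *: C i)].

Definition normalized (n k : nat) (C : 'I_n -> 'M[R]_k) : Prop :=
  (forall i, symmetric (C i)) /\ (forall i, psd (C i)) /\ \sum_(i < n) C i = 1%:M.

Definition mdist (n k : nat) (C C' : 'I_n -> 'M[R]_k) : R :=
  \big[Num.max/0]_(i < n) opnorm (C i - C' i).

Definition unit_ball (n : nat) : set 'cV[R]_n := [set x | enorm x <= 1].

Definition dist (n : nat) (x : 'cV[R]_n) (K : set 'cV[R]_n) : R :=
  inf [set enorm (x - y) | y in K].

Definition hdist (n : nat) (K K' : set 'cV[R]_n) : R :=
  Num.max (sup [set dist x K' | x in @unit_ball n `&` K])
          (sup [set dist y K | y in @unit_ball n `&` K']).
End Defs.

(* Main.v *)
Require Import Defs.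
From mathcomp Require Import all_boot all_order all_algebra.
From mathcomp Require Import boolp classical_sets reals.
From mathcomp Require Import ring lra.
Set Implicit Arguments. Unset Strict Implicit.
Import Order.TTheory GRing.Theory Num.Theory.
Local Open Scope ring_scope.

Section H.
Variable R : realType.

Definition dotv (m : nat) (a b : 'cV[R]_m) : R := \sum_(j < m) a j 0 * b j 0.

Lemma enorm_ge0 m (v : 'cV[R]_m) : 0 <= enorm v.
Proof. exact: sqrtr_ge0. Qed.

Lemma sumsq_ge0 m (v : 'cV[R]_m) : 0 <= \sum_(i < m) v i 0 ^+ 2.
Proof. by apply: sumr_ge0 => i _; exact: sqr_ge0. Qed.

Lemma enorm_sq m (v : 'cV[R]_m) : enorm v ^+ 2 = \sum_(i < m) v i 0 ^+ 2.
Proof. by rewrite /enorm sqr_sqrtr // sumsq_ge0. Qed.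

Lemma enorm_coord m (v : 'cV[R]_m) i : `|v i 0| <= enorm v.
Proof.
rewrite -sqrtr_sqr /enorm; apply: ler_wsqrtr.
rewrite (bigD1 i) //= lerDl; apply: sumr_ge0 => j _; exact: sqr_ge0.
Qed.

Lemma enormZ m c (v : 'cV[R]_m) : enorm (c *: v) = `|c| * enorm v.
Proof.
rewrite /enorm -sqrtr_sqr -sqrtrM ?sqr_ge0 // mulr_sumr.
by congr Num.sqrt; apply: eq_bigr => i _; rewrite mxE exprMn.
Qed.

Lemma enorm_eq0 m (v : 'cV[R]_m) : enorm v = 0 -> v = 0.
Proof.
move=> /eqP; rewrite /enorm sqrtr_eq0 => H.
have H0 : \sum_(i < m) v i 0 ^+ 2 = 0 by apply/eqP; rewrite eq_le H sumsq_ge0.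
apply/matrixP => i j; rewrite ord1 mxE.
move/psumr_eq0P : H0 => H1; apply/eqP; rewrite -sqrf_eq0 H1 //.
move=> k _; exact: sqr_ge0.
Qed.

Lemma CS m (a b : 'cV[R]_m) : dotv a b ^+ 2 <= (\sum_(j < m) a j 0 ^+ 2) * (\sum_(j < m) b j 0 ^+ 2).
Proof.
set A := \sum_(j < m) a j 0 ^+ 2; set B := dotv a b; set Cc := \sum_(j < m) b j 0 ^+ 2.
have H : 0 <= \sum_(j < m) (A * b j 0 - B * a j 0) ^+ 2 by apply: sumr_ge0 => j _; exact: sqr_ge0.
have E : \sum_(j < m) (A * b j 0 - B * a j 0) ^+ 2 = A * (A * Cc - B ^+ 2).
  rewrite (eq_bigr (fun j => A ^+ 2 * b j 0 ^+ 2 - (2 * A * B) * (a j 0 * b j 0) + B ^+ 2 * a j 0 ^+ 2)); last first.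
    by move=> j _; ring.
  rewrite big_split big_split /= sumrN -!mulr_sumr -/A -/Cc.
  rewrite /B /dotv; ring.
have A0 : 0 <= A by exact: sumsq_ge0.
rewrite le_eqVlt in A0; case/orP: A0 => [/eqP A0|A0].
  have av : forall j, a j 0 = 0.
    move=> j; apply/eqP; rewrite -sqrf_eq0; apply/eqP.
    by move/esym/psumr_eq0P: A0 => ->// k _; exact: sqr_ge0.
  have -> : B = 0 by rewrite /B /dotv big1 // => j _; rewrite av mul0r.
  rewrite expr0n /=.
  by rewrite -A0 mul0r.
rewrite E in H.
rewrite -subr_ge0; by rewrite pmulr_rge0 in H.
Qed.

Lemma CSn m (a b : 'cV[R]_m) : `|dotv a b| <= enorm a * enorm b.
Proof.
rewrite -sqrtr_sqr /enorm -sqrtrM ?sumsq_ge0 //; apply: ler_wsqrtr; exact: CS.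
Qed.


Definition qf (m : nat) (A : 'M[R]_m) (v : 'cV[R]_m) : R := (v^T *m A *m v) 0 0.

Lemma qfE m (A : 'M[R]_m) v : qf A v = dotv v (A *m v).
Proof. by rewrite /qf -mulmxA mxE; apply: eq_bigr => j _; rewrite mxE. Qed.

Lemma qfD m (A B : 'M[R]_m) v : qf (A + B) v = qf A v + qf B v.
Proof. by rewrite /qf mulmxDr mulmxDl mxE. Qed.

Lemma qf0 m (v : 'cV[R]_m) : qf 0 v = 0.
Proof. by rewrite /qf mulmx0 mul0mx mxE. Qed.

Lemma qfZ m c (A : 'M[R]_m) v : qf (c *: A) v = c * qf A v.
Proof. by rewrite /qf -scalemxAr -scalemxAl mxE. Qed.

Lemma qfN m (A : 'M[R]_m) v : qf (- A) v = - qf A v.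
Proof. by rewrite -scaleN1r qfZ mulN1r. Qed.

Lemma qf_sum m n (c : 'I_n -> R) (A : 'I_n -> 'M[R]_m) v :
  qf (\sum_(i < n) c i *: A i) v = \sum_(i < n) c i * qf (A i) v.
Proof.
rewrite (big_morph (fun B => qf B v) (fun X Y => @qfD m X Y v) (qf0 v)).
by apply: eq_bigr => i _; rewrite qfZ.
Qed.

Lemma qf_id m (v : 'cV[R]_m) : qf 1%:M v = enorm v ^+ 2.
Proof. by rewrite qfE enorm_sq mul1mx /dotv; apply: eq_bigr => i _; rewrite expr2. Qed.

Lemma opnorm_has_ub m (A : 'M[R]_m) :
  has_ubound [set enorm (A *m v) | v in [set v : 'cV[R]_m | enorm v <= 1]].
Proof.
exists (Num.sqrt (\sum_(i < m) (\sum_(j < m) `|A i j|) ^+ 2)).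
move=> _ [v /= Hv <-]; rewrite /enorm; apply: ler_wsqrtr.
apply: ler_sum => i _.
have H : `|(A *m v) i 0| <= \sum_(j < m) `|A i j|.
  rewrite mxE; apply: le_trans (ler_norm_sum _ _ _) _.
  apply: ler_sum => j _; rewrite normrM.
  rewrite -[X in _ <= X]mulr1; apply: ler_wpM2l => //.
  exact: le_trans (enorm_coord _ _) Hv.
rewrite -real_normK ?num_real //.
rewrite !expr2; apply: ler_pM => //.
Qed.

Lemma opnorm_le m (A : 'M[R]_m) v : enorm (A *m v) <= opnorm A * enorm v.
Proof.
have [/enorm_eq0 ->|] := eqVneq (enorm v) 0.
  by rewrite mulmx0 -(scale0r (0 : 'cV[R]_m)) enormZ normr0 !mul0r mulr0.
move=> nz; have sp : 0 < enorm v by rewrite lt0r nz enorm_ge0.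
have Hw : enorm ((enorm v)^-1 *: v) <= 1.
  by rewrite enormZ ger0_norm ?invr_ge0 ?enorm_ge0 // mulVf.
have : enorm (A *m ((enorm v)^-1 *: v)) <= opnorm A.
  by apply: (ub_le_sup (opnorm_has_ub A)); exists ((enorm v)^-1 *: v).
rewrite /opnorm.
rewrite -scalemxAr enormZ ger0_norm ?invr_ge0 ?enorm_ge0 // -/(opnorm A).
by rewrite ler_pdivrMl // mulrC.
Qed.

Lemma qf_le m (A : 'M[R]_m) v : `|qf A v| <= opnorm A * enorm v ^+ 2.
Proof.
rewrite qfE; apply: le_trans (CSn _ _) _.
rewrite mulrC expr2 mulrA; apply: ler_wpM2r; first exact: enorm_ge0.
exact: opnorm_le.
Qed.


Lemma spec_qf n k (C : 'I_n -> 'M[R]_k) x :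
  spectrahedron C x <-> forall v, 0 <= \sum_(i < n) x i 0 * qf (C i) v.
Proof.
split=> H v; first by rewrite -qf_sum; exact: H.
by have := H v; rewrite -qf_sum.
Qed.

Lemma one_side n k (C C' : 'I_n -> 'M[R]_k) eps x :
  0 <= eps -> (forall i v, `|qf (C' i) v - qf (C i) v| <= eps * enorm v ^+ 2) ->
  \sum_(i < n) C' i = 1%:M -> spectrahedron C x -> enorm x <= 1 ->
  dist x (spectrahedron C') <= n%:R * Num.sqrt n%:R * eps.
Proof.
move=> e0 Hd HC' /spec_qf Hx Hn.
set t := n%:R * eps.
have t0 : 0 <= t by rewrite /t mulr_ge0.
set y : 'cV[R]_n := x + const_mx t.
have Hy : spectrahedron C' y.
  apply/spec_qf => v.
  have h0 : 0 <= eps * enorm v ^+ 2 by rewrite mulr_ge0 // sqr_ge0.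
  set h := eps * enorm v ^+ 2 in h0 Hd *.
  rewrite (eq_bigr (fun i => x i 0 * qf (C' i) v + t * qf (C' i) v)); last first.
    by move=> i _; rewrite !mxE mulrDl.
  have E1 : \sum_(i < n) qf (C' i) v = enorm v ^+ 2.
    rewrite -qf_id -HC' (eq_bigr (fun i => 1 *: C' i)); last by move=> i _; rewrite scale1r.
    by rewrite qf_sum; apply: eq_bigr => i _; rewrite mul1r.
  rewrite big_split /= -mulr_sumr E1.
  have L1 : \sum_(i < n) (x i 0 * qf (C i) v - `|x i 0| * h) <= \sum_(i < n) x i 0 * qf (C' i) v.
    apply: ler_sum => i _.
    rewrite lerBlDr -lerBlDl -mulrBr.
    apply: le_trans (ler_norm _) _.
    rewrite normrM distrC; apply: ler_wpM2l => //; exact: Hd.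
  have L2 : \sum_(i < n) `|x i 0| * h <= t * enorm v ^+ 2.
    apply: (@le_trans _ _ (\sum_(i < n) h)).
      apply: ler_sum => i _; rewrite -[X in _ <= X]mul1r; apply: ler_wpM2r => //.
      exact: le_trans (enorm_coord _ _) Hn.
    rewrite sumr_const card_ord -mulr_natl /t -mulrA; exact: lexx.
  rewrite sumrB in L1.
  have := Hx v; lra.
have -> : n%:R * Num.sqrt n%:R * eps = enorm (x - y).
  rewrite /y opprD addrA subrr add0r -scaleN1r enormZ normrN normr1 mul1r.
  rewrite /enorm (eq_bigr (fun _ => t ^+ 2)); last by move=> i _; rewrite mxE.
  rewrite sumr_const card_ord -[in RHS]mulr_natl sqrtrM ?ler0n // sqrtr_sqr ger0_norm //.
  rewrite /t; ring.
apply: (ge_inf (E := [set enorm (x - y0) | y0 in spectrahedron C'])).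
  by exists 0 => _ [z _ <-]; exact: enorm_ge0.
by exists y.
Qed.


Lemma opnorm_ge0 m (A : 'M[R]_m) : 0 <= opnorm A.
Proof.
apply: le_trans (enorm_ge0 (A *m 0)) _.
apply: (ub_le_sup (opnorm_has_ub A)); exists 0 => //=.
by rewrite /enorm big1 ?sqrtr0 ?ler01 // => i _; rewrite mxE expr0n.
Qed.

Lemma mdist_ge0 n k (C C' : 'I_n -> 'M[R]_k) : 0 <= mdist C C'.
Proof.
rewrite /mdist; apply: (big_ind (fun y => 0 <= y)) => //.
  by move=> a b Ha Hb; rewrite le_max Ha.
move=> i _; exact: opnorm_ge0.
Qed.

Lemma mdist_ge n k (C C' : 'I_n -> 'M[R]_k) i : opnorm (C i - C' i) <= mdist C C'.
Proof. by rewrite /mdist (bigD1 i) //= le_max lexx. Qed.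

Lemma qf_diff n k (C C' : 'I_n -> 'M[R]_k) i v :
  `|qf (C' i) v - qf (C i) v| <= mdist C C' * enorm v ^+ 2.
Proof.
rewrite distrC -qfN -qfD; apply: le_trans (qf_le _ _) _.
apply: ler_wpM2r; [exact: sqr_ge0 | exact: mdist_ge].
Qed.

Lemma mdistC n k (C C' : 'I_n -> 'M[R]_k) i v :
  `|qf (C i) v - qf (C' i) v| <= mdist C C' * enorm v ^+ 2.
Proof. by rewrite distrC qf_diff. Qed.

Lemma zero_in n k (C : 'I_n -> 'M[R]_k) : (unit_ball (R:=R) (n:=n) `&` spectrahedron C)%classic 0.
Proof.
split.
  rewrite /unit_ball /= /enorm big1 ?sqrtr0 ?ler01 // => i _; by rewrite mxE expr0n.
apply/spec_qf => v; rewrite big1 // => i _; by rewrite mxE mul0r.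
Qed.

End H.

Theorem lemma13 (R : realType) (n k : nat) (C C' : 'I_n -> 'M[R]_k) :
  normalized C -> normalized C' ->
  hdist (spectrahedron C) (spectrahedron C') <=
    (n%:R * Num.sqrt (n%:R : R)) * mdist C C'.
Proof.
move=> [_ [_ HC]] [_ [_ HC']].
rewrite /hdist ge_max; apply/andP; split.
  apply: ge_sup; first by exists (dist 0 (spectrahedron C')), 0; first exact: zero_in.
  move=> _ [x [Hn Hx] <-]; apply: one_side => //; first exact: mdist_ge0.
  exact: qf_diff.
apply: ge_sup; first by exists (dist 0 (spectrahedron C)), 0; first exact: zero_in.
move=> _ [x [Hn Hx] <-]; apply: one_side => //; first exact: mdist_ge0.
exact: mdistC.
Qed.
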